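(* Let $T>0$. Let $E:[0,T]\times\mathbb{R}^2\to\mathbb{R}^2$ and $b:[0,T]\times\mathbb{R}^2\to\mathbb{R}$ be bounded and Lipschitz (i.e. in $W^{1,\infty}$), with $\inf|b|>0$, and set $B=b\,e_3$. For $\Delta t>0$ and $\varepsilon>0$ set $t^n=n\Delta t$, $\lambda=\Delta t/\varepsilon^2$, and given $(x^0,v^0)\in\mathbb{R}^2\times\mathbb{R}^2$ define $(x^n,v^n)$ by $$\varepsilon\frac{x^{n+1}-x^n}{\Delta t}=v^{n+1},\qquad \varepsilon\frac{v^{n+1}-v^n}{\Delta t}=\frac1\varepsilon v^{n+1}\wedge B(t^n,x^n)+E(t^n,x^n),$$ and $(y^n)$ by $y^0=x^0$ and $\dfrac{y^{n+1}-y^n}{\Delta t}=U(t^n,y^n)$. Then there exist constants $C>0$ and $\lambda_0>0$ depending only on $E$, $b$ and $T$ such that whenever $0<\Delta t\le1$ and $\lambda\ge\lambda_0$, for all $n$ with $t^n\le T$, $$\|x^n-y^n\|\le\frac{C\,\Delta t}{\lambda}\Big[1+\Big\|\frac{v^0}{\varepsilon}-U(t^0,x^0)\Big\|\Big].$$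
   Context: Vectors of $\mathbb{R}^2$ are identified with vectors $(w_1,w_2,0)$ of $\mathbb{R}^3$, $e_3=(0,0,1)$, and $\wedge$ is the cross product; thus for $w\in\mathbb{R}^2$ and $B=b\,e_3$, $w\wedge B=b\,(w_2,-w_1)\in\mathbb{R}^2$. The guiding-center drift is $U(t,x)=\dfrac{E(t,x)\wedge B(t,x)}{\|B(t,x)\|^2}$. *)

(* Defs.v *)
From Stdlib Require Import Reals Lra.
Open Scope R_scope.

(* Vectors of R^2, identified with (w1,w2,0) in R^3. *)
Definition vec : Type := (R * R)%type.
Definition vadd (u w : vec) : vec := (fst u + fst w, snd u + snd w).
Definition vsub (u w : vec) : vec := (fst u - fst w, snd u - snd w).
Definition vscale (a : R) (u : vec) : vec := (a * fst u, a * snd u).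
Definition vnorm (u : vec) : R := sqrt (fst u ^ 2 + snd u ^ 2).

(* w /\ (b e3) = b (w2, -w1) *)
Definition wedge_e3 (w : vec) (b : R) : vec := (b * snd w, - (b * fst w)).

(* Guiding-center drift U = (E /\ B) / |B|^2 with B = b e3, |B|^2 = b^2. *)
Definition drift (E : R -> vec -> vec) (b : R -> vec -> R) (t : R) (x : vec) : vec :=
  vscale (/ (b t x ^ 2)) (wedge_e3 (E t x) (b t x)).

Definition W1inf_vec (T : R) (E : R -> vec -> vec) : Prop :=
  (exists M, forall t x, 0 <= t <= T -> vnorm (E t x) <= M) /\
  (exists L, forall t s x y, 0 <= t <= T -> 0 <= s <= T ->
     vnorm (vsub (E t x) (E s y)) <= L * (Rabs (t - s) + vnorm (vsub x y))).

Definition W1inf_scal (T : R) (b : R -> vec -> R) : Prop :=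
  (exists M, forall t x, 0 <= t <= T -> Rabs (b t x) <= M) /\
  (exists L, forall t s x y, 0 <= t <= T -> 0 <= s <= T ->
     Rabs (b t x - b s y) <= L * (Rabs (t - s) + vnorm (vsub x y))).

Definition scheme (E : R -> vec -> vec) (b : R -> vec -> R) (dt eps : R)
  (x v : nat -> vec) : Prop :=
  forall n : nat,
    vscale (eps / dt) (vsub (x (S n)) (x n)) = v (S n) /\
    vscale (eps / dt) (vsub (v (S n)) (v n)) =
      vadd (vscale (/ eps) (wedge_e3 (v (S n)) (b (INR n * dt) (x n))))
           (E (INR n * dt) (x n)).

Definition gc_scheme (E : R -> vec -> vec) (b : R -> vec -> R) (dt : R)
  (y : nat -> vec) : Prop :=
  forall n : nat,
    vscale (/ dt) (vsub (y (S n)) (y n)) = drift E b (INR n * dt) (y n).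

(* Main.v *)
Require Import Defs.
From Stdlib Require Import Reals Lra.
Open Scope R_scope.

Lemma vnorm_nonneg u : 0 <= vnorm u.
Proof. apply sqrt_pos. Qed.

Lemma sqrt_le_of_sq x y : 0 <= y -> x <= y ^ 2 -> sqrt x <= y.
Proof. intros Hy H. rewrite <- (sqrt_pow2 y Hy). now apply sqrt_le_1_alt. Qed.

Lemma vnorm_sq u : vnorm u ^ 2 = fst u ^ 2 + snd u ^ 2.
Proof. unfold vnorm. rewrite <- Rsqr_pow2. rewrite Rsqr_sqrt; [reflexivity|nra]. Qed.

Lemma vnorm_add u w : vnorm (vadd u w) <= vnorm u + vnorm w.
Proof.
  unfold vnorm at 1. apply sqrt_le_of_sq.
  - pose proof (vnorm_nonneg u); pose proof (vnorm_nonneg w); lra.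
  - destruct u as [a b], w as [c d]; simpl.
    pose proof (vnorm_sq (a,b)) as H1; pose proof (vnorm_sq (c,d)) as H2; cbn [fst snd] in H1, H2.
    pose proof (vnorm_nonneg (a,b)); pose proof (vnorm_nonneg (c,d)).
    set (p := vnorm (a,b)) in *. set (r := vnorm (c,d)) in *.
    assert (a*c+b*d <= p*r).
    { assert ((a*c+b*d)^2 <= p^2*r^2) by (rewrite H1, H2; pose proof (pow2_ge_0 (a*d-b*c)); nra).
      assert (0 <= p*r) by nra.
      destruct (Rle_dec (a*c+b*d) 0). nra. nra. }
    nra.
Qed.

Lemma vnorm_scale a u : vnorm (vscale a u) = Rabs a * vnorm u.
Proof.
  unfold vnorm, vscale; cbn [fst snd].
  replace ((a * fst u) ^ 2 + (a * snd u) ^ 2) with (a² * (fst u ^ 2 + snd u ^ 2)) by (unfold Rsqr; ring).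
  rewrite sqrt_mult_alt by apply Rle_0_sqr. now rewrite sqrt_Rsqr_abs.
Qed.

Lemma vnorm_wedge u c : vnorm (wedge_e3 u c) = Rabs c * vnorm u.
Proof.
  unfold vnorm, wedge_e3; cbn [fst snd].
  replace ((c * snd u) ^ 2 + (- (c * fst u)) ^ 2) with (c² * (fst u ^ 2 + snd u ^ 2)) by (unfold Rsqr; ring).
  rewrite sqrt_mult_alt by apply Rle_0_sqr. now rewrite sqrt_Rsqr_abs.
Qed.

Lemma vnorm_sub_tri u w z : vnorm (vsub u w) <= vnorm (vsub u z) + vnorm (vsub z w).
Proof.
  replace (vsub u w) with (vadd (vsub u z) (vsub z w)).
  apply vnorm_add. destruct u, w, z; unfold vadd, vsub; simpl; f_equal; ring.
Qed.

Lemma vnorm_tri3 u w : vnorm u <= vnorm (vsub u w) + vnorm w.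
Proof.
  replace u with (vadd (vsub u w) w) at 1.
  apply vnorm_add. destruct u, w; unfold vadd, vsub; simpl; f_equal; ring.
Qed.

Lemma norm_rot z1 z2 c :
  sqrt (z1^2+z2^2) * Rabs c <= sqrt ((z1 - c*z2)^2 + (z2 + c*z1)^2).
Proof.
  rewrite <- sqrt_Rsqr_abs. rewrite <- sqrt_mult by (nra || apply Rle_0_sqr).
  apply sqrt_le_1_alt. unfold Rsqr. nra.
Qed.

Lemma exp_pow_le a n : 0 <= a -> (1 + a) ^ n <= exp (INR n * a).
Proof.
  intros Ha. induction n as [|n IH].
  - simpl. rewrite Rmult_0_l, exp_0. lra.
  - rewrite S_INR. replace ((INR n + 1) * a) with (INR n * a + a) by ring.
    rewrite exp_plus. simpl. pose proof (exp_ineq1_le a).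
    rewrite Rmult_comm. apply Rmult_le_compat; try lra.
    apply pow_le; lra.
Qed.

Lemma drift_eq E b t x : b t x <> 0 -> drift E b t x = wedge_e3 (E t x) (/ b t x).
Proof.
  intros Hb. unfold drift. destruct (E t x) as [e1 e2].
  unfold vscale, wedge_e3; cbn [fst snd]. f_equal; field; auto.
Qed.

Lemma inv_abs_le b0 c : 0 < b0 -> b0 <= Rabs c -> Rabs (/ c) <= / b0.
Proof.
  intros H0 H. assert (c <> 0) by (intro; subst; rewrite Rabs_R0 in H; lra).
  rewrite Rabs_inv. apply Rinv_le_contravar; lra.
Qed.

Lemma drift_bound E b t x b0 ME : 0 < b0 -> b0 <= Rabs (b t x) -> vnorm (E t x) <= ME ->
  vnorm (drift E b t x) <= ME / b0.
Proof.
  intros H0 Hb HE. assert (b t x <> 0) by (intro Z; rewrite Z, Rabs_R0 in Hb; lra).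
  rewrite drift_eq by auto. rewrite vnorm_wedge.
  pose proof (inv_abs_le b0 (b t x) H0 Hb). pose proof (vnorm_nonneg (E t x)).
  pose proof (Rabs_pos (/ b t x)). unfold Rdiv.
  assert (0 < / b0) by (apply Rinv_0_lt_compat; lra).
  nra.
Qed.

Lemma wedge_sub u u' c c' :
  vsub (wedge_e3 u c) (wedge_e3 u' c') = vadd (wedge_e3 (vsub u u') c) (wedge_e3 u' (c - c')).
Proof. destruct u, u'; unfold vsub, vadd, wedge_e3; cbn [fst snd]; f_equal; ring. Qed.

Lemma drift_lip E b t s x y b0 ME LE Lb : 0 < b0 ->
  b0 <= Rabs (b t x) -> b0 <= Rabs (b s y) -> vnorm (E s y) <= ME ->
  vnorm (vsub (E t x) (E s y)) <= LE * (Rabs (t - s) + vnorm (vsub x y)) ->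
  Rabs (b t x - b s y) <= Lb * (Rabs (t - s) + vnorm (vsub x y)) ->
  vnorm (vsub (drift E b t x) (drift E b s y)) <=
    (LE / b0 + ME * Lb / b0 ^ 2) * (Rabs (t - s) + vnorm (vsub x y)).
Proof.
  intros H0 H1 H2 HM HE Hb.
  assert (b t x <> 0) by (intro Z; rewrite Z, Rabs_R0 in H1; lra).
  assert (b s y <> 0) by (intro Z; rewrite Z, Rabs_R0 in H2; lra).
  rewrite !drift_eq by auto. rewrite wedge_sub.
  eapply Rle_trans; [apply vnorm_add|]. rewrite !vnorm_wedge.
  set (D := Rabs (t - s) + vnorm (vsub x y)).
  assert (0 <= D) by (unfold D; pose proof (Rabs_pos (t-s)); pose proof (vnorm_nonneg (vsub x y)); lra).
  pose proof (inv_abs_le b0 (b t x) H0 H1).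
  assert (Hi : Rabs (/ b t x - / b s y) <= Lb * D / b0 ^ 2).
  { replace (/ b t x - / b s y) with ((b s y - b t x) / (b t x * b s y)) by (field; auto).
    unfold Rdiv. rewrite Rabs_mult, Rabs_inv, Rabs_mult.
    rewrite <- Rabs_Ropp, Ropp_minus_distr.
    apply Rmult_le_compat; try apply Rabs_pos.
    - left; apply Rinv_0_lt_compat. pose proof (Rabs_pos (b t x)); nra.
    - assumption.
    - apply Rinv_le_contravar. nra. simpl. rewrite Rmult_1_r. apply Rmult_le_compat; lra. }
  pose proof (vnorm_nonneg (vsub (E t x) (E s y))). pose proof (vnorm_nonneg (E s y)).
  pose proof (Rabs_pos (/ b t x)). pose proof (Rabs_pos (/ b t x - / b s y)).
  assert (0 < / b0) by (apply Rinv_0_lt_compat; lra).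
  assert (Rabs (/ b t x) * vnorm (vsub (E t x) (E s y)) <= LE / b0 * D).
  { unfold Rdiv. replace (LE * / b0 * D) with (/ b0 * (LE * D)) by ring.
    apply Rmult_le_compat; auto. }
  assert (Rabs (/ b t x - / b s y) * vnorm (E s y) <= ME * Lb / b0 ^ 2 * D).
  { replace (ME * Lb / b0 ^ 2 * D) with ((Lb * D / b0 ^ 2) * ME) by (field; lra).
    apply Rmult_le_compat; auto. }
  lra.
Qed.

Lemma step_rel eps dt bb (E v v' : vec) : 0 < eps -> 0 < dt -> bb <> 0 ->
  vscale (eps/dt) (vsub v' v) = vadd (vscale (/eps) (wedge_e3 v' bb)) E ->
  vnorm (vsub (vscale (/eps) v') (vscale (/(bb^2)) (wedge_e3 E bb))) * (dt/eps^2 * Rabs bb)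
  <= vnorm (vsub (vscale (/eps) v) (vscale (/(bb^2)) (wedge_e3 E bb))).
Proof.
  intros He Hd Hb Heq.
  destruct E as [e1 e2], v as [a b], v' as [a' b'].
  unfold vscale, vsub, vadd, wedge_e3, vnorm in *; cbn [fst snd] in *.
  injection Heq as H1 H2.
  assert (Ha : a' = a + dt/eps*(/eps*(bb*b')+e1)).
  { assert (a' - a = dt/eps*(/eps*(bb*b')+e1)) by (rewrite <- H1; field; lra). lra. }
  assert (Hb' : b' = b + dt/eps*(/eps*(-(bb*a'))+e2)).
  { assert (b' - b = dt/eps*(/eps*(-(bb*a'))+e2)) by (rewrite <- H2; field; lra). lra. }
  set (c := dt/eps^2 * bb).
  set (z1 := / eps * a' - / bb ^ 2 * (bb * e2)).
  set (z2 := / eps * b' - / bb ^ 2 * (- (bb * e1))).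
  assert (R1 : / eps * a - / bb ^ 2 * (bb * e2) = z1 - c * z2).
  { unfold z1, z2, c. rewrite Ha. field. lra. }
  assert (R2 : / eps * b - / bb ^ 2 * (- (bb * e1)) = z2 + c * z1).
  { unfold z1, z2, c. rewrite Hb'. field. lra. }
  rewrite R1, R2.
  replace (dt / eps ^ 2 * Rabs bb) with (Rabs c).
  apply norm_rot.
  unfold c. rewrite Rabs_mult. f_equal. apply Rabs_pos_eq.
  unfold Rdiv. apply Rmult_le_pos. lra. left; apply Rinv_0_lt_compat. nra.
Qed.

Lemma vnorm_sub_self u : vnorm (vsub u u) = 0.
Proof. destruct u; unfold vnorm, vsub; cbn [fst snd].
  replace ((r - r) ^ 2 + (r0 - r0) ^ 2) with 0 by ring. apply sqrt_0. Qed.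

Lemma vnorm_sub_sym u w : vnorm (vsub u w) = vnorm (vsub w u).
Proof. destruct u, w; unfold vnorm, vsub; cbn [fst snd]. f_equal; ring. Qed.

Lemma x_update eps dt x x' v' : 0 < eps -> 0 < dt ->
  vscale (eps/dt) (vsub x' x) = v' -> x' = vadd x (vscale dt (vscale (/eps) v')).
Proof.
  intros He Hd H. subst v'. destruct x, x'; unfold vadd, vscale, vsub; cbn [fst snd].
  f_equal; field; lra.
Qed.

Lemma y_update dt y y' D : 0 < dt ->
  vscale (/dt) (vsub y' y) = D -> y' = vadd y (vscale dt D).
Proof.
  intros Hd H. subst D. destruct y, y'; unfold vadd, vscale, vsub; cbn [fst snd].
  f_equal; field; lra.
Qed.

Lemma vec_id x y w U V dt : vsub (vadd x (vscale dt w)) (vadd y (vscale dt V)) =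
  vadd (vsub x y) (vadd (vscale dt (vsub w U)) (vscale dt (vsub U V))).
Proof. destruct x, y, w, U, V; unfold vadd, vsub, vscale; cbn [fst snd]; f_equal; ring. Qed.

Lemma vsub_update x w dt : vsub (vadd x (vscale dt w)) x = vscale dt w.
Proof. destruct x, w; unfold vadd, vsub, vscale; cbn [fst snd]; f_equal; ring. Qed.

Theorem theorem4p1 (T : R) (E : R -> vec -> vec) (b : R -> vec -> R) :
  0 < T ->
  W1inf_vec T E ->
  W1inf_scal T b ->
  (exists b0, 0 < b0 /\ forall t x, 0 <= t <= T -> b0 <= Rabs (b t x)) ->
  exists C lambda0 : R, 0 < C /\ 0 < lambda0 /\
    forall (dt eps : R) (x v y : nat -> vec),
      0 < dt -> dt <= 1 -> 0 < eps ->
      lambda0 <= dt / eps ^ 2 ->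
      scheme E b dt eps x v ->
      y 0%nat = x 0%nat ->
      gc_scheme E b dt y ->
      forall n : nat, INR n * dt <= T ->
        vnorm (vsub (x n) (y n)) <=
          C * dt / (dt / eps ^ 2) *
          (1 + vnorm (vsub (vscale (/ eps) (v 0%nat)) (drift E b 0 (x 0%nat)))).
Proof.
  intros HT [[ME HME] [LE HLE]] [_ [Lb HLb]] [b0 [Hb0 Hbb]].
  set (ME' := Rabs ME). set (LE' := Rabs LE). set (Lb' := Rabs Lb).
  assert (HME' : forall t x, 0 <= t <= T -> vnorm (E t x) <= ME').
  { intros t x Ht. eapply Rle_trans; [apply HME; auto| apply RRle_abs]. }
  assert (Hnn : forall t s x y, 0 <= Rabs (t - s) + vnorm (vsub x y)).
  { intros. pose proof (Rabs_pos (t-s)); pose proof (vnorm_nonneg (vsub x y)); lra. }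
  assert (HLE' : forall t s x y, 0 <= t <= T -> 0 <= s <= T ->
     vnorm (vsub (E t x) (E s y)) <= LE' * (Rabs (t - s) + vnorm (vsub x y))).
  { intros. eapply Rle_trans; [apply HLE; auto|]. apply Rmult_le_compat_r; [apply Hnn|apply RRle_abs]. }
  assert (HLb' : forall t s x y, 0 <= t <= T -> 0 <= s <= T ->
     Rabs (b t x - b s y) <= Lb' * (Rabs (t - s) + vnorm (vsub x y))).
  { intros. eapply Rle_trans; [apply HLb; auto|]. apply Rmult_le_compat_r; [apply Hnn|apply RRle_abs]. }
  assert (0 <= ME') by apply Rabs_pos. assert (0 <= LE') by apply Rabs_pos. assert (0 <= Lb') by apply Rabs_pos.
  clear HME HLE HLb.
  set (LU := LE' / b0 + ME' * Lb' / b0 ^ 2).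
  set (MU := ME' / b0).
  assert (HLU : 0 <= LU).
  { unfold LU. assert (0 < / b0) by (apply Rinv_0_lt_compat; lra).
    assert (0 < / b0 ^ 2) by (apply Rinv_0_lt_compat; nra). unfold Rdiv.
    apply Rplus_le_le_0_compat; apply Rmult_le_pos; try nra. }
  assert (HMU : 0 <= MU) by (unfold MU, Rdiv; apply Rmult_le_pos; [lra| left; apply Rinv_0_lt_compat; lra]).
  set (K := LU * (1 + MU)).
  assert (HK : 0 <= K) by (unfold K; nra).
  exists (exp (LU * T) * 2 * (1 + T * K) / b0), (2 * (1 + LU) / b0).
  split. { unfold Rdiv. pose proof (exp_pos (LU*T)). assert (0 < / b0) by (apply Rinv_0_lt_compat; lra).
    apply Rmult_lt_0_compat; [|auto]. assert (0 < 1 + T * K) by nra.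
    apply Rmult_lt_0_compat; [|auto]. lra. }
  split. { unfold Rdiv. assert (0 < / b0) by (apply Rinv_0_lt_compat; lra). nra. }
  intros dt eps x v y Hdt Hdt1 Heps Hlam Hsch Hy0 Hgc.
  set (lam := dt / eps ^ 2) in *.
  assert (Hlampos : 0 < lam) by (unfold lam, Rdiv; apply Rmult_lt_0_compat; [lra|apply Rinv_0_lt_compat; nra]).
  set (q := / (lam * b0)).
  assert (Hq : 0 < q) by (unfold q; apply Rinv_0_lt_compat; nra).
  assert (Hq2 : q * (1 + LU * dt) <= / 2).
  { unfold q. assert (2 * (1 + LU) <= lam * b0).
    { apply (Rmult_le_compat_r b0) in Hlam; [|lra]. unfold Rdiv in Hlam.
      rewrite Rmult_assoc, Rinv_l in Hlam by lra. lra. }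
    apply (Rmult_le_reg_l (lam * b0)); [nra|].
    rewrite <- Rmult_assoc, Rinv_r by nra. nra. }
  set (w := fun n => vscale (/ eps) (v n)).
  set (U := fun n => drift E b (INR n * dt) (x n)).
  set (d := fun n => vnorm (vsub (w (S n)) (U n))).
  set (r0 := vnorm (vsub (vscale (/ eps) (v 0%nat)) (drift E b 0 (x 0%nat)))).
  set (a := q * r0).
  set (D := 2 * q * K * dt).
  set (err := fun n => vnorm (vsub (x n) (y n))).
  assert (Hr0 : 0 <= r0) by apply vnorm_nonneg.
  assert (Ha : 0 <= a) by (unfold a; nra).
  assert (HD : 0 <= D) by (unfold D; repeat apply Rmult_le_pos; lra).
  assert (Htime : forall n, INR n * dt <= T -> 0 <= INR n * dt <= T).
  { intros n Hn. split; [|auto]. apply Rmult_le_pos; [apply pos_INR|lra]. }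
  assert (Hbn : forall n, INR n * dt <= T -> b (INR n * dt) (x n) <> 0).
  { intros n Hn Z. pose proof (Hbb _ (x n) (Htime n Hn)). rewrite Z, Rabs_R0 in H2. lra. }
  assert (Fstep : forall n, INR n * dt <= T -> d n <= q * vnorm (vsub (w n) (U n))).
  { intros n Hn. destruct (Hsch n) as [_ H2].
    pose proof (step_rel eps dt _ _ _ _ Heps Hdt (Hbn n Hn) H2) as S.
    fold lam in S. pose proof (Hbb _ (x n) (Htime n Hn)).
    unfold d, w, U, q. unfold drift.
    set (A := vnorm _) in S |- *. set (B := vnorm _) in S |- *.
    assert (0 <= A) by apply vnorm_nonneg.
    rewrite Rinv_mult. apply (Rmult_le_reg_l (lam * b0)); [nra|].
    replace (lam * b0 * (/ lam * / b0 * B)) with B by (field; lra). assert (A*(lam*b0) <= A*(lam*Rabs (b (INR n * dt) (x n)))) by (apply Rmult_le_compat_l; [lra|apply Rmult_le_compat_l; lra]). lra. }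
  assert (Hx : forall n, x (S n) = vadd (x n) (vscale dt (w (S n)))).
  { intros n. destruct (Hsch n) as [Hs1 _]. now apply (x_update eps dt). }
  assert (Hy : forall n, y (S n) = vadd (y n) (vscale dt (drift E b (INR n * dt) (y n)))).
  { intros n. apply y_update; auto. }
  assert (Hle : forall n, INR (S n) * dt <= T -> INR n * dt <= T).
  { intros n Hn. rewrite S_INR in Hn. lra. }
  assert (Inv : forall n, INR n * dt <= T ->
    d n <= (/2) ^ n * a + D /\
    err n <= (1 + LU * dt) ^ n * (2 * dt * a * (1 - (/2) ^ n) + INR n * dt * D)).
  { induction n as [|n IH]; intros Hn.
    - split.
      + eapply Rle_trans; [apply Fstep; auto|]. simpl pow. unfold a, r0.
        replace (U 0%nat) with (drift E b 0 (x 0%nat)) by (unfold U; simpl INR; now rewrite Rmult_0_l).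
        unfold w. lra.
      + unfold err. rewrite Hy0, vnorm_sub_self. simpl. lra.
    - pose proof (Hle n Hn) as Hn'. destruct (IH Hn') as [IHd IHe].
      pose proof (Htime _ Hn) as HtS. pose proof (Htime _ Hn') as Ht.
      assert (Hdn : 0 <= d n) by apply vnorm_nonneg.
      assert (Hwn : vnorm (w (S n)) <= d n + MU).
      { eapply Rle_trans; [apply (vnorm_tri3 _ (U n))|].
        change (vnorm (vsub (w (S n)) (U n))) with (d n).
        pose proof (drift_bound E b (INR n * dt) (x n) b0 ME' Hb0 (Hbb _ _ Ht) (HME' _ _ Ht)).
        change (drift E b (INR n * dt) (x n)) with (U n) in H2. fold MU in H2. lra. }
      assert (HUlip : vnorm (vsub (U (S n)) (U n)) <= LU * (dt + dt * vnorm (w (S n)))).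
      { unfold U. eapply Rle_trans.
        apply (drift_lip E b _ _ _ _ b0 ME' LE' Lb' Hb0 (Hbb _ _ HtS) (Hbb _ _ Ht) (HME' _ _ Ht)
                 (HLE' _ _ _ _ HtS Ht) (HLb' _ _ _ _ HtS Ht)).
        fold LU. apply Rmult_le_compat_l; auto.
        rewrite S_INR. replace ((INR n + 1) * dt - INR n * dt) with dt by ring.
        rewrite Rabs_pos_eq by lra. rewrite Hx, vsub_update, vnorm_scale, Rabs_pos_eq by lra. lra. }
      split.
      + eapply Rle_trans; [apply Fstep; auto|].
        assert (Hwu : vnorm (vsub (w (S n)) (U (S n))) <= d n + LU * (dt + dt * (d n + MU))).
        { eapply Rle_trans; [apply (vnorm_sub_tri _ _ (U n))|].
          change (vnorm (vsub (w (S n)) (U n))) with (d n).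
          rewrite (vnorm_sub_sym (U n)).
          assert (LU * (dt + dt * vnorm (w (S n))) <= LU * (dt + dt * (d n + MU))).
          { apply Rmult_le_compat_l; auto. apply Rplus_le_compat_l. apply Rmult_le_compat_l; lra. }
          lra. }
        apply Rle_trans with (q * (1 + LU * dt) * d n + q * K * dt).
        { eapply Rle_trans; [apply Rmult_le_compat_l; [lra|exact Hwu]|]. right; unfold K; ring. }
        assert (q * (1 + LU * dt) * d n <= / 2 * d n) by (apply Rmult_le_compat_r; lra).
        simpl pow. unfold D in *. lra.
      + unfold err. rewrite Hx, Hy. rewrite (vec_id _ _ _ (U n)).
        eapply Rle_trans; [apply vnorm_add|]. eapply Rle_trans; [apply Rplus_le_compat_l, vnorm_add|].
        rewrite !vnorm_scale, Rabs_pos_eq by lra. change (vnorm (vsub (x n) (y n))) with (err n).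
        change (vnorm (vsub (w (S n)) (U n))) with (d n).
        assert (HUy : vnorm (vsub (U n) (drift E b (INR n * dt) (y n))) <= LU * err n).
        { unfold U. eapply Rle_trans.
          apply (drift_lip E b _ _ _ _ b0 ME' LE' Lb' Hb0 (Hbb _ _ Ht) (Hbb _ _ Ht) (HME' _ _ Ht)
                 (HLE' _ _ _ _ Ht Ht) (HLb' _ _ _ _ Ht Ht)).
          fold LU. unfold Rminus. rewrite Rplus_opp_r, Rabs_R0, Rplus_0_l. right; reflexivity. }
        set (P := (1 + LU * dt) ^ n) in *.
        assert (HP : 1 <= P) by (unfold P; apply pow_R1_Rle; nra).
        set (h := (/2) ^ n) in *.
        assert (Hh : 0 <= h) by (unfold h; apply pow_le; lra).
        assert (Hh1 : h <= 1) by (unfold h; assert ((/2)^n <= 1^n) by (apply pow_incr; lra); rewrite pow1 in *; lra).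
        set (Sn := 2 * dt * a * (1 - h) + INR n * dt * D) in *.
        assert (HSn : 0 <= Sn) by (unfold Sn; pose proof (pos_INR n); apply Rplus_le_le_0_compat; repeat apply Rmult_le_pos; lra).
        replace (2 * dt * a * (1 - (/ 2) ^ S n) + INR (S n) * dt * D)
          with (Sn + dt * (h * a + D)) by (unfold Sn, h; rewrite S_INR; simpl pow; field).
        simpl pow. fold P.
        assert (0 <= err n) by apply vnorm_nonneg.
        assert (err n + dt * d n + dt * (LU * err n) <= (1 + LU * dt) * P * Sn + dt * (h * a + D)).
        { assert (dt * d n <= dt * (h * a + D)) by (apply Rmult_le_compat_l; lra).
          assert ((1+LU*dt)*err n <= (1+LU*dt)*(P*Sn)) by (apply Rmult_le_compat_l; nra). lra. }
        assert (0 <= dt * (h * a + D)) by nra.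
        assert (dt * (h * a + D) <= (1 + LU * dt) * P * (dt * (h * a + D))).
        { assert (1 <= (1 + LU * dt) * P) by (assert (1 <= 1 + LU*dt) by nra; nra).
          rewrite <- (Rmult_1_l (dt * (h * a + D))) at 1. apply Rmult_le_compat_r; lra. }
        nra. }
  intros n Hn. destruct (Inv n Hn) as [_ He]. unfold err in He.
  eapply Rle_trans; [apply He|].
  set (P := (1 + LU * dt) ^ n) in *.
  assert (HP : P <= exp (LU * T)).
  { unfold P. eapply Rle_trans; [apply exp_pow_le; nra|].
    replace (INR n * (LU * dt)) with (LU * (INR n * dt)) by ring.
    assert (LU * (INR n * dt) <= LU * T) by (apply Rmult_le_compat_l; lra).
    destruct H2 as [Hlt|Heq]; [left; now apply exp_increasing|right; now rewrite Heq]. }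
  set (h := (/2) ^ n) in *.
  assert (Hh : 0 <= h) by (unfold h; apply pow_le; lra).
  assert (HP0 : 0 <= P) by (unfold P; apply pow_le; nra).
  pose proof (pos_INR n).
  assert (Hin : 2 * dt * a * (1 - h) + INR n * dt * D <= q * (2 * dt * r0 + 2 * T * K * dt)).
  { assert (2 * dt * a * (1 - h) <= 2 * dt * a) by (assert (0 <= 2*dt*a) by nra; nra).
    assert (INR n * dt * D <= T * D) by (apply Rmult_le_compat_r; lra).
    unfold a, D in *. lra. }
  assert (Hin0 : 0 <= 2 * dt * a * (1 - h) + INR n * dt * D).
  { assert (h <= 1) by (unfold h; assert ((/2)^n <= 1^n) by (apply pow_incr; lra); rewrite pow1 in *; lra).
    apply Rplus_le_le_0_compat; repeat apply Rmult_le_pos; lra. }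
  fold r0.
  replace (exp (LU * T) * 2 * (1 + T * K) / b0 * dt / lam * (1 + r0))
    with (exp (LU * T) * (q * (2 * dt * (1 + T * K) * (1 + r0)))) by (unfold q; field; lra).
  eapply Rle_trans; [apply Rmult_le_compat_r; [exact Hin0| exact HP]|].
  pose proof (exp_pos (LU * T)).
  apply Rmult_le_compat_l; [lra|].
  eapply Rle_trans; [exact Hin|]. apply Rmult_le_compat_l; [lra|].
  assert (0 <= T * K) by nra. assert (0 <= T * K * r0) by nra. nra.
Qed.
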